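(* Let $l:\mathbb{Z}^2\to\mathcal{L}^4_0$ be a principal contact element net with one family of spherical parameter lines $\{l_{i,j}\}_{i\in\mathbb{Z}}$. Generically, $\mathcal{L}_A^3l$ is Goursat degenerate and $\mathcal{L}_B^2l$ is Laplace degenerate.
   Context: Let $e_1,\dots,e_6$ be an orthonormal basis of $\mathbb{R}^{4,2}$ with $\langle e_i,e_i\rangle=1$ for $i\le4$ and $\langle e_5,e_5\rangle=\langle e_6,e_6\rangle=-1$. The Lie quadric is $\mathcal{L}^4=\{[x]\in\mathbb{R}\mathrm{P}^5:\langle x,x\rangle=0\}$ and $\mathcal{L}^4_0$ the set of lines contained in $\mathcal{L}^4$. A discrete line congruence is a map $l$ from $\mathbb{Z}^2$ to lines in a projective space such that neighbouring lines intersect; a principal contact element net is a discrete line congruence with values in $\mathcal{L}^4_0$. $\vee$ denotes projective span. The net has one family of spherical parameter lines $\{l_{i,j}\}_{i}$ if for every $j$ the span $\bigvee_i l_{i,j}$ is $4$-dimensional and the planes $\{l_{i,j}\vee l_{i,j+1}\}_{i\in\mathbb{Z}}$ are concurrent. Laplace transforms of line congruences: $\mathcal{L}_Al(i,j)=(l_{i,j}\vee l_{i+1,j})\cap(l_{i,j+1}\vee l_{i+1,j+1})$, $\mathcal{L}_Bl(i,j)=(l_{i,j}\vee l_{i,j+1})\cap(l_{i+1,j}\vee l_{i+1,j+1})$ (again line congruences), with iterates. $\mathcal{L}_A^kl$ is Goursat degenerate if $\mathcal{L}_A^kl(i,j)$ is independent of $i$; $\mathcal{L}_B^kl$ is Laplace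 degenerate if $\mathcal{L}_B^kl(i,j)$ is independent of $i$. ''Generically'' means for data in general position subject to the stated constraints. *)

(* Defs.v *)
(* Projective space RP^5 = subspaces of R^6 ('rV[R]_6);
   a projective subspace of dimension d is a vector subspace of dimension d+1. *)
From HB Require Import structures.
From mathcomp Require Import all_boot all_order all_algebra.
Set Implicit Arguments.
Unset Strict Implicit.
Unset Printing Implicit Defensive.
Import Order.TTheory GRing.Theory Num.Theory.
Local Open Scope ring_scope.

Section LieGeometry.
Variable R : realFieldType.
Local Notation V := 'rV[R]_6.

Definition lie_form (x y : V) : R :=
  \sum_(k < 6) (if (k < 4)%N then 1 else -1) * x 0 k * y 0 k.

Definition is_line (U : {vspace V}) : Prop := \dim U = 2%N.
Definition is_point (U : {vspace V}) : Prop := \dim U = 1%N.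

Definition in_lie_quadric (U : {vspace V}) : Prop :=
  forall x, x \in U -> lie_form x x = 0.

Definition net := int -> int -> {vspace V}.

Definition intersect (U W : {vspace V}) : Prop := (0 < \dim (U :&: W))%N.

Definition line_congruence (l : net) : Prop :=
  (forall i j, is_line (l i j)) /\
  (forall i j, intersect (l i j) (l (i + 1)%R j) /\ intersect (l i j) (l i (j + 1)%R)).

Definition principal_contact_element_net (l : net) : Prop :=
  line_congruence l /\ forall i j, in_lie_quadric (l i j).

Definition is_span_of (H : {vspace V}) (f : int -> {vspace V}) : Prop :=
  (forall i, (f i <= H)%VS) /\
  (forall W : {vspace V}, (forall i, (f i <= W)%VS) -> (H <= W)%VS).

Definition concurrency_point (l : net) (j : int) (p : {vspace V}) : Prop :=
  is_point p /\ forall i, (p <= l i j + l i (j + 1)%R)%VS.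

Definition spherical_i_lines (l : net) : Prop :=
  forall j,
    (exists H, is_span_of H (fun i => l i j) /\ \dim H = 5%N) /\
    (exists p, concurrency_point l j p).

Definition LA (m : net) : net := fun i j =>
  ((m i j + m (i + 1)%R j) :&: (m i (j + 1)%R + m (i + 1)%R (j + 1)%R))%VS.
Definition LB (m : net) : net := fun i j =>
  ((m i j + m i (j + 1)%R) :&: (m (i + 1)%R j + m (i + 1)%R (j + 1)%R))%VS.

Definition goursat_degenerate (m : net) : Prop :=
  forall i i' j, m i j = m i' j.
Definition laplace_degenerate (m : net) : Prop :=
  forall i i' j, m i j = m i' j.

(* "Generically": open general-position conditions:
   (1) the iterated Laplace transforms involved are lines;
   (2) any four consecutive sphere-hyperplanes H_j..H_{j+3} meet in a
       projective line (general position of the hyperplanes);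
   (3) concurrency points of consecutive rows are distinct. *)
Definition generic_net (l : net) : Prop :=
  (forall k, (1 <= k <= 3)%N -> forall i j, is_line (iter k LA l i j)) /\
  (forall k, (1 <= k <= 2)%N -> forall i j, is_line (iter k LB l i j)) /\
  (forall j (H0 H1 H2 H3 : {vspace V}),
      is_span_of H0 (fun i => l i j) ->
      is_span_of H1 (fun i => l i (j + 1)%R) ->
      is_span_of H2 (fun i => l i (j + 2)%R) ->
      is_span_of H3 (fun i => l i (j + 3)%R) ->
      \dim (H0 :&: H1 :&: H2 :&: H3) = 2%N) /\
  (forall j p q, concurrency_point l j p -> concurrency_point l (j + 1)%R q ->
      p != q).

End LieGeometry.

(* Main.v *)
Require Import Defs.
From HB Require Import structures.
From mathcomp Require Import all_boot all_order all_algebra.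

Set Implicit Arguments.
Unset Strict Implicit.
Unset Printing Implicit Defensive.
Import Order.TTheory GRing.Theory Num.Theory.

Section Aux.
Variable R : realFieldType.
Local Notation V := 'rV[R]_6.

Lemma eq_of_sub_dim (A B : {vspace V}) :
  (A <= B)%VS -> (\dim B <= \dim A)%N -> A = B.
Proof. by move=> h1 h2; apply/eqP; rewrite eqEdim h1 h2. Qed.

Lemma LA_sub (m : net R) (j : int) (G0 G1 : {vspace V}) :
  (forall i, (m i j <= G0)%VS) -> (forall i, (m i (j + 1)%R <= G1)%VS) ->
  forall i, (LA m i j <= G0 :&: G1)%VS.
Proof.
move=> h0 h1 i; rewrite /LA; apply: capvS; rewrite subv_add ?h0 ?h1 //.
Qed.

Lemma LB_sup (m : net R) (i j : int) (p : {vspace V}) :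
  (forall i, (p <= m i j + m i (j + 1)%R)%VS) -> (p <= LB m i j)%VS.
Proof. by move=> h; rewrite /LB subv_cap !h. Qed.

Lemma dim_sum_pts (p q : {vspace V}) :
  \dim p = 1%N -> \dim q = 1%N -> p != q -> \dim (p + q) = 2%N.
Proof.
move=> hp hq hpq.
have hc : \dim (p :&: q) = 0%N.
  have hle := dimvS (capvSl p q); rewrite hp in hle.
  case: (posnP (\dim (p :&: q))) => // hpos.
  have h1 : \dim (p :&: q) = 1%N by apply/eqP; rewrite eqn_leq hle hpos.
  exfalso; move/negP: hpq; apply; apply/eqP.
  have e1 : (p :&: q = p)%VS by apply: eq_of_sub_dim; rewrite ?capvSl ?h1 ?hp.
  have e2 : (p :&: q = q)%VS by apply: eq_of_sub_dim; rewrite ?capvSr ?h1 ?hq.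
  by rewrite -e1 e2.
by have := dimv_sum_cap p q; rewrite hc hp hq addn0.
Qed.

End Aux.

Theorem proposition5p6 (R : realFieldType) (l : net R) :
  principal_contact_element_net l ->
  spherical_i_lines l ->
  generic_net l ->
  goursat_degenerate (iter 3 (@LA R) l) /\ laplace_degenerate (iter 2 (@LB R) l).
Proof.
move=> _ hsph [hA [hB [hH hpq]]]; split.
- move=> i i' j.
  have [[H0 [s0 _]] _] := hsph j.
  have [[H1 [s1 _]] _] := hsph (j + 1)%R.
  have [[H2 [s2 _]] _] := hsph (j + 2)%R.
  have [[H3 [s3 _]] _] := hsph (j + 3)%R.
  have K2 := hH j H0 H1 H2 H3 s0 s1 s2 s3.
  have e2 : (j + 1 + 1 = j + 2 :> int)%R by rewrite -addrA.
  have e3 : (j + 2 + 1 = j + 3 :> int)%R by rewrite -addrA.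
  have a0 := LA_sub (fun i => s0.1 i) (fun i => s1.1 i).
  have a1 : forall i, (LA l i (j+1)%R <= H1 :&: H2)%VS.
    by apply: LA_sub => k; [apply: s1.1 | rewrite e2; apply: s2.1].
  have a2 : forall i, (LA l i (j+2)%R <= H2 :&: H3)%VS.
    by apply: LA_sub => k; [apply: s2.1 | rewrite e3; apply: s3.1].
  have b0 := LA_sub a0 a1.
  have b1 : forall i, (LA (LA l) i (j+1)%R <= (H1 :&: H2) :&: (H2 :&: H3))%VS.
    by apply: LA_sub => k; [apply: a1 | rewrite e2; apply: a2].
  have c0 := LA_sub b0 b1.
  have sub : forall k, (iter 3 (@LA R) l k j <= H0 :&: H1 :&: H2 :&: H3)%VS.
    move=> k; apply: subv_trans (c0 k) _.
    rewrite !subv_cap.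
    apply/andP; split; first apply/andP; first split; first apply/andP; first split.
    + by apply: subv_trans (capvSl _ _) _; apply: subv_trans (capvSl _ _) _; apply: capvSl.
    + by apply: subv_trans (capvSl _ _) _; apply: subv_trans (capvSl _ _) _; apply: capvSr.
    + by apply: subv_trans (capvSl _ _) _; apply: subv_trans (capvSr _ _) _; apply: capvSr.
    + by apply: subv_trans (capvSr _ _) _; apply: subv_trans (capvSr _ _) _; apply: capvSr.
  have eq : forall k, iter 3 (@LA R) l k j = (H0 :&: H1 :&: H2 :&: H3)%VS.
    move=> k; apply: eq_of_sub_dim; first exact: sub.
    by rewrite K2 (hA 3%N isT k j).
  by rewrite !eq.
- move=> i i' j.
  have [_ [p hp]] := hsph j.
  have [_ [q hq]] := hsph (j + 1)%R.
  have hd := dim_sum_pts hp.1 hq.1 (hpq _ _ _ hp hq).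
  have lp : forall k, (p <= LB l k j)%VS by move=> k; apply: LB_sup; apply: hp.2.
  have lq : forall k, (q <= LB l k (j+1)%R)%VS by move=> k; apply: LB_sup; apply: hq.2.
  have eq : forall k, iter 2 (@LB R) l k j = (p + q)%VS.
    move=> k; apply/esym/eq_of_sub_dim; last by rewrite hd (hB 2%N isT k j).
    rewrite /= /LB subv_cap; apply/andP; split; apply: addvS; [exact: lp|exact: lq|exact: lp|exact: lq].
  by rewrite !eq.
Qed.
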